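(* Let $I\subseteq\mathbb{R}$ be an interval and $f:I\to\mathbb{R}$ a function. Let $a,b,c\in I$ be such that $\frac{a+b}{2}$, $\frac{a+c}{2}$ and $\frac{b+c}{2}$ are points of convexity of $f$ relative to the entire interval $I$. Then $$\frac{f(a)+f(b)+f(c)}{3}+f\left(\frac{a+b+c}{3}\right)\ge\frac{2}{3}\left[f\left(\frac{a+b}{2}\right)+f\left(\frac{a+c}{2}\right)+f\left(\frac{b+c}{2}\right)\right].$$
   Context: A point $p\in I$ is a point of convexity of $f$ relative to $I$ if $f(p)\le\sum_{k=1}^n\lambda_k f(x_k)$ for every finite family of points $x_1,\dots,x_n\in I$ and positive weights $\lambda_1,\dots,\lambda_n$ with $\sum_k\lambda_k=1$ and $\sum_k\lambda_k x_k=p$. *)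

(* Defs.v *)
From Stdlib Require Import Reals List.
Open Scope R_scope.

Definition is_interval (I : R -> Prop) : Prop :=
  forall x y z, I x -> I y -> x <= z <= y -> I z.

Definition wsum (g : R -> R) (l : list (R * R)) : R :=
  fold_right (fun p acc => fst p * g (snd p) + acc) 0 l.

Definition weights_sum (l : list (R * R)) : R :=
  fold_right (fun p acc => fst p + acc) 0 l.

Definition point_of_convexity (I : R -> Prop) (f : R -> R) (p : R) : Prop :=
  I p /\
  forall l : list (R * R),
    l <> nil ->
    Forall (fun q => 0 < fst q /\ I (snd q)) l ->
    weights_sum l = 1 ->
    wsum (fun x => x) l = p ->
    f p <= wsum f l.

(* Main.v *)
Require Import Defs.
From Stdlib Require Import Reals List Lra.
Open Scope R_scope.

Lemma seg (I : R -> Prop) (f : R -> R) u m v :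
  I u -> I v -> u <= m <= v -> point_of_convexity I f m ->
  (v - u) * f m <= (v - m) * f u + (m - u) * f v.
Proof.
  intros Iu Iv [h1 h2] [_ Hc].
  destruct (Req_dec m u) as [->|Hmu].
  { assert (E : (v - u) * f u = (v-u) * f u + (u - u) * f v) by ring. lra. }
  destruct (Req_dec m v) as [->|Hmv].
  { assert (E : (v - u) * f v = (v-v) * f u + (v - u) * f v) by ring. lra. }
  assert (Hd : 0 < v - u) by lra.
  assert (H := Hc ((( v - m)/(v-u), u) :: ((m-u)/(v-u), v) :: nil)).
  unfold wsum, weights_sum in H; simpl in H.
  assert (Hf : f m <= (v - m) / (v - u) * f u + ((m - u) / (v - u) * f v + 0)).
  { apply H.
    - discriminate.
    - constructor; [split; simpl; auto|constructor; [split; simpl; auto|constructor]].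
      + apply Rdiv_lt_0_compat; lra.
      + apply Rdiv_lt_0_compat; lra.
    - field; lra.
    - field; lra. }
  apply Rmult_le_compat_l with (r := v - u) in Hf; [|lra].
  replace ((v - u) * ((v - m) / (v - u) * f u + ((m - u) / (v - u) * f v + 0)))
    with ((v - m) * f u + (m - u) * f v) in Hf by (field; lra).
  exact Hf.
Qed.

Lemma mid (I : R -> Prop) (f : R -> R) b c :
  I b -> I c -> point_of_convexity I f ((b + c) / 2) ->
  2 * f ((b + c) / 2) <= f b + f c.
Proof.
  intros Ib Ic [_ Hc].
  assert (H := Hc ((1/2, b) :: (1/2, c) :: nil)).
  unfold wsum, weights_sum in H; simpl in H.
  assert (Hf : f ((b + c) / 2) <= 1/2 * f b + (1/2 * f c + 0)).
  { apply H.
    - discriminate.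
    - constructor; [split; simpl; auto; lra|constructor; [split; simpl; auto; lra|constructor]].
    - field.
    - field. }
  lra.
Qed.

Lemma Lx (I : R -> Prop) (f : R -> R) (a b c : R) :
  is_interval I ->
  I a -> I b -> I c ->
  point_of_convexity I f ((a + b) / 2) ->
  point_of_convexity I f ((a + c) / 2) ->
  point_of_convexity I f ((b + c) / 2) ->
  ((a <= b /\ a <= c /\ a + b <= 2 * c /\ a + c <= 2 * b) \/
   (b <= a /\ c <= a /\ 2 * c <= a + b /\ 2 * b <= a + c)) ->
  f a + f b + f c + 3 * f ((a + b + c) / 3)
    >= 2 * (f ((a + b) / 2) + f ((a + c) / 2) + f ((b + c) / 2)).
Proof.
  intros Hint Ia Ib Ic Pz Py Px Hord.
  set (s := (a + b + c) / 3).
  assert (Hx := mid I f b c Ib Ic Px).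
  destruct Hord as [(h1&h2&h3&h4)|(h1&h2&h3&h4)].
  - assert (Is : I s).
    { destruct (Rle_dec b c).
      - apply (Hint a c); auto; unfold s; lra.
      - apply (Hint a b); auto; unfold s; lra. }
    assert (Sy := seg I f a ((a + c)/2) s Ia Is ltac:(unfold s; lra) Py).
    assert (Sz := seg I f a ((a + b)/2) s Ia Is ltac:(unfold s; lra) Pz).
    destruct (Req_dec s a) as [E|E].
    + assert (b = a) by (unfold s in E; lra). assert (c = a) by (unfold s in E; lra).
      subst b c. replace ((a+a)/2) with a by field. unfold s.
      replace ((a+a+a)/3) with a by field. lra.
    + assert (Hp : 0 < s - a) by (unfold s; unfold s in E; lra).
      assert (K : (s - a) * (2 * f ((a + b) / 2) + 2 * f ((a + c) / 2))
                  <= (s - a) * (f a + 3 * f s)).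
      { assert (E2 : (s - a) * (f a + 3 * f s) =
          2 * ((s - (a + c) / 2) * f a + ((a + c) / 2 - a) * f s) +
          2 * ((s - (a + b) / 2) * f a + ((a + b) / 2 - a) * f s))
          by (unfold s; field).
        lra. }
      apply Rmult_le_reg_l in K; [lra|exact Hp].
  - assert (Is : I s).
    { destruct (Rle_dec b c).
      - apply (Hint b a); auto; unfold s; lra.
      - apply (Hint c a); auto; unfold s; lra. }
    assert (Sy := seg I f s ((a + c)/2) a Is Ia ltac:(unfold s; lra) Py).
    assert (Sz := seg I f s ((a + b)/2) a Is Ia ltac:(unfold s; lra) Pz).
    destruct (Req_dec s a) as [E|E].
    + assert (b = a) by (unfold s in E; lra). assert (c = a) by (unfold s in E; lra).
      subst b c. replace ((a+a)/2) with a by field. unfold s.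
      replace ((a+a+a)/3) with a by field. lra.
    + assert (Hp : 0 < a - s) by (unfold s; unfold s in E; lra).
      assert (K : (a - s) * (2 * f ((a + b) / 2) + 2 * f ((a + c) / 2))
                  <= (a - s) * (f a + 3 * f s)).
      { assert (E2 : (a - s) * (f a + 3 * f s) =
          2 * ((a - (a + c) / 2) * f s + ((a + c) / 2 - s) * f a) +
          2 * ((a - (a + b) / 2) * f s + ((a + b) / 2 - s) * f a))
          by (unfold s; field).
        lra. }
      apply Rmult_le_reg_l in K; [lra|exact Hp].
Qed.

Theorem theorem3 (I : R -> Prop) (f : R -> R) (a b c : R) :
  is_interval I ->
  I a -> I b -> I c ->
  point_of_convexity I f ((a + b) / 2) ->
  point_of_convexity I f ((a + c) / 2) ->
  point_of_convexity I f ((b + c) / 2) ->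
  (f a + f b + f c) / 3 + f ((a + b + c) / 3)
    >= 2 / 3 * (f ((a + b) / 2) + f ((a + c) / 2) + f ((b + c) / 2)).
Proof.
  intros Hint Ia Ib Ic Pab Pac Pbc.
  assert (Eab : (b + a) / 2 = (a + b) / 2) by field.
  assert (Eac : (c + a) / 2 = (a + c) / 2) by field.
  assert (Ebc : (c + b) / 2 = (b + c) / 2) by field.
  assert (Pba : point_of_convexity I f ((b + a) / 2)) by (rewrite Eab; exact Pab).
  assert (Pca : point_of_convexity I f ((c + a) / 2)) by (rewrite Eac; exact Pac).
  assert (Pcb : point_of_convexity I f ((c + b) / 2)) by (rewrite Ebc; exact Pbc).
  assert (S1 : (b + a + c) / 3 = (a + b + c) / 3) by field.
  assert (S2 : (c + a + b) / 3 = (a + b + c) / 3) by field.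
  enough (f a + f b + f c + 3 * f ((a + b + c) / 3)
    >= 2 * (f ((a + b) / 2) + f ((a + c) / 2) + f ((b + c) / 2))) by lra.
  destruct (Rle_dec a b); destruct (Rle_dec b c); destruct (Rle_dec a c);
  destruct (Rle_dec (a + c) (2 * b)); destruct (Rle_dec (a + b) (2 * c));
  destruct (Rle_dec (b + c) (2 * a));
  first
   [ apply (Lx I f a b c); auto; lra
   | assert (H := Lx I f b a c Hint Ib Ia Ic Pba Pbc Pac ltac:(lra));
     rewrite Eab, S1 in H; lra
   | assert (H := Lx I f c a b Hint Ic Ia Ib Pca Pcb Pab ltac:(lra));
     rewrite Eac, Ebc, S2 in H; lra
   | idtac ].
Qed.
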